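(* For every $k\in\mathbb N_{>0}$, there exists a $2$-cell $\mathrm{tel}_k$ of the free weak $\omega$-category generated by the computad $\mathrm{Tel}_k$ whose source is the unbiased composite $f_1\ast_0 f_2\ast_0\cdots\ast_0 f_k\ast_0 g_k\ast_0\cdots\ast_0 g_1$ of the $2k$ consecutive $1$-cells $f_1,\dots,f_k,g_k,\dots,g_1$ (formally, the image of the unbiased composition cell over the chain of $2k$ consecutive $1$-cells under the morphism sending the $i$-th $1$-position to $f_i$ for $i\le k$ and to $g_{2k-i+1}$ for $k<i\le 2k$), and whose target is the identity $\mathrm{id}(x_0)$.
   Context: Computads (Dean et al.) are generating data for weak $\omega$-categories: a set of generators in each dimension, each $n$-generator attached to a pair of parallel $(n-1)$-cells of the free weak $\omega$-category on the lower-dimensional generators. $\mathrm{Tel}_k$ is the $2$-computad with $0$-generators $x_0,\dots,x_k$, $1$-generators $f_i\colon x_{i-1}\to x_i$ and $g_i\colon x_i\to x_{i-1}$ for $1\le i\le k$, $2$-generators $\alpha_i\colon f_i\ast_0 g_i\to\mathrm{id}(x_{i-1})$ for $1\le i\le k$, and no higher generators; here $\ast_0$ is the canonical binary composition of $1$-cells and $\mathrm{id}$ the canonical identity. The unbiased composite of a chain of consecutive $1$-cells is the canonical composition operation over the Batanin tree of the chain (a pasting diagram $\bullet\to\bullet\to\cdots\to\bullet$). *)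

(* Defs.v *)
From mathcomp Require Import all_boot.
Set Implicit Arguments. Unset Strict Implicit. Unset Printing Implicit Defensive.

Inductive tree : Type := br : seq tree -> tree.
Definition leaf : tree := br [::].

Fixpoint tdim (B : tree) : nat :=
  let: br L := B in
  let fix go (L : seq tree) : nat :=
      match L with
      | [::] => 0
      | T :: L' => maxn (tdim T).+1 (go L')
      end in
  go L.

(* A position of dimension d is a list [:: i_1; ...; i_d; j]: descend into
   child i_1, then child i_2, ..., then take the 0-position j there. *)
Definition pos := seq nat.

Fixpoint positions (B : tree) : seq pos :=
  match B with
  | br L => mkseq (fun j => [:: j]) (size L).+1 ++
      (fix go (i : nat) (L : seq tree) : seq pos :=
         match L with
         | [::] => [::]
         | T :: L' => map (cons i) (positions T) ++ go i.+1 L'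
         end) 0 L
  end.

Fixpoint psrc (p : pos) : pos :=
  match p with
  | i :: [:: _] => [:: i]
  | i :: p' => i :: psrc p'
  | [::] => [::]
  end.
Fixpoint ptgt (p : pos) : pos :=
  match p with
  | i :: [:: _] => [:: i.+1]
  | i :: p' => i :: ptgt p'
  | [::] => [::]
  end.

Fixpoint bdry (n : nat) (B : tree) {struct B} : tree :=
  match n, B with
  | 0, _ => leaf
  | n'.+1, br L => br (map (bdry n') L)
  end.

Fixpoint sincl (n : nat) (B : tree) (p : pos) {struct n} : pos :=
  match n, B with
  | 0, _ => [:: 0]
  | n'.+1, br L =>
      match p with
      | [:: j] => [:: j]
      | i :: p' => i :: sincl n' (nth leaf L i) p'
      | [::] => [::]
      end
  end.
Fixpoint tincl (n : nat) (B : tree) (p : pos) {struct n} : pos :=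
  match n, B with
  | 0, br L => [:: size L]
  | n'.+1, br L =>
      match p with
      | [:: j] => [:: j]
      | i :: p' => i :: tincl n' (nth leaf L i) p'
      | [::] => [::]
      end
  end.

Definition simg (n : nat) (B : tree) : seq pos := [seq sincl n B q | q <- positions (bdry n B)].
Definition timg (n : nat) (B : tree) : seq pos := [seq tincl n B q | q <- positions (bdry n B)].

Definition chain (m : nat) : tree := br (nseq m leaf).

(* coh B U W tau : coherence over the tree B, for the sphere (U,W) of
   Free(B), with the morphism Free(B) -> C given by tau, listing the image
   of each position of B in the order of [positions B]. *)
Inductive term (V : Type) : Type :=
| var : V -> term V
| coh : tree -> term pos -> term pos -> seq (term V) -> term V.
Arguments var {V} _.
Arguments coh {V} _ _ _ _.

Definition junk {V : Type} : term V := coh leaf (var [:: 0]) (var [:: 0]) [::].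

Definition lookup {V : Type} (B : tree) (tau : seq (term V)) (p : pos) : term V :=
  nth junk tau (index p (positions B)).

Fixpoint subst {V : Type} (B : tree) (tau : seq (term V)) (t : term pos) : term V :=
  match t with
  | var p => lookup B tau p
  | coh B' U W s => coh B' U W (map (subst B tau) s)
  end.

Record computad := Computad {
  gen : Type;
  isgen : gen -> Prop;
  gdim : gen -> nat;
  gsrc : gen -> term gen;
  gtgt : gen -> term gen }.
Arguments isgen : clear implicits.
Arguments gdim : clear implicits.
Arguments gsrc : clear implicits.
Arguments gtgt : clear implicits.

Definition csrc (C : computad) (t : term (gen C)) : term (gen C) :=
  match t with
  | var v => gsrc C v
  | coh B U _ tau => subst B tau U
  end.
Definition ctgt (C : computad) (t : term (gen C)) : term (gen C) :=
  match t with
  | var v => gtgt C v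
  | coh B _ W tau => subst B tau W
  end.

Definition treeComp (B : tree) : computad :=
  @Computad pos (fun p => p \in positions B) (fun p => (size p).-1)
            (fun p => var (psrc p)) (fun p => var (ptgt p)).
Arguments csrc : clear implicits.
Arguments ctgt : clear implicits.

Inductive below (q : pos) : pos -> Prop :=
| below_refl : below q q
| below_src p : 1 < size p -> below q (psrc p) -> below q p
| below_tgt p : 1 < size p -> below q (ptgt p) -> below q p.

Fixpoint seqIn {A : Type} (x : A) (s : seq A) : Prop :=
  if s is y :: s' then y = x \/ seqIn x s' else False.

Inductive in_supp (q : pos) : term pos -> Prop :=
| supp_var p : below q p -> in_supp q (var p)
| supp_coh B U W s t : seqIn t s -> in_supp q t -> in_supp q (coh B U W s).

Definition full (B : tree) (n : nat) (U W : term pos) : Prop :=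
  (tdim B = n.+1 /\ (forall q, in_supp q U <-> q \in simg n B)
                 /\ (forall q, in_supp q W <-> q \in timg n B))
  \/ ((forall q, in_supp q U <-> q \in positions B)
      /\ (forall q, in_supp q W <-> q \in positions B)).

(* wf C n t : t is an n-cell of the free weak omega-category on C *)
Unset Implicit Arguments.
Inductive wf : forall C : computad, nat -> term (gen C) -> Prop :=
| wf_var (C : computad) (n : nat) (v : gen C) :
    isgen C v -> gdim C v = n -> wf C n (var v)
| wf_coh (C : computad) (n : nat) (B : tree) (U W : term pos) (tau : seq (term (gen C))) :
    wf (treeComp B) n U -> wf (treeComp B) n W ->
    (0 < n -> csrc (treeComp B) U = csrc (treeComp B) W) ->
    (0 < n -> ctgt (treeComp B) U = ctgt (treeComp B) W) ->
    full B n U W ->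
    size tau = size (positions B) ->
    (forall p, p \in positions B -> wf C (size p).-1 (lookup B tau p)) ->
    (forall p, p \in positions B -> 1 < size p ->
        csrc C (lookup B tau p) = lookup B tau (psrc p)) ->
    (forall p, p \in positions B -> 1 < size p ->
        ctgt C (lookup B tau p) = lookup B tau (ptgt p)) ->
    wf C n.+1 (coh B U W tau).
Set Implicit Arguments.

Definition ucell (m : nat) : term pos :=
  coh (chain m) (var [:: 0]) (var [:: m]) (map var (positions (chain m))).
Definition idcell : term pos := coh leaf (var [:: 0]) (var [:: 0]) [:: var [:: 0]].

Inductive telgen : Type :=
| TX of nat
| TF of nat
| TG of nat
| TA of nat.

Definition hA (i : nat) (p : pos) : term telgen :=
  match p with
  | [:: 0] => var (TX i.-1)
  | [:: 1] => var (TX i)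
  | [:: 2] => var (TX i.-1)
  | [:: 0; 0] => var (TF i)
  | [:: 1; 0] => var (TG i)
  | _ => var (TX 0)
  end.

Definition tel_src (v : telgen) : term telgen :=
  match v with
  | TX _ => var (TX 0) (* unused: 0-generators have no boundary *)
  | TF i => var (TX i.-1)
  | TG i => var (TX i)
  | TA i => subst (chain 2) [seq hA i p | p <- positions (chain 2)] (ucell 2)
  end.
Definition tel_tgt (v : telgen) : term telgen :=
  match v with
  | TX _ => var (TX 0)
  | TF i => var (TX i)
  | TG i => var (TX i.-1)
  | TA i => subst leaf [:: var (TX i.-1)] idcell
  end.
Definition tel_isgen (k : nat) (v : telgen) : Prop :=
  match v with
  | TX i => i <= k
  | TF i | TG i | TA i => 0 < i <= k
  end.
Definition tel_dim (v : telgen) : nat :=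
  match v with TX _ => 0 | TF _ | TG _ => 1 | TA _ => 2 end.

Definition Tel (k : nat) : computad :=
  @Computad telgen (tel_isgen k) tel_dim tel_src tel_tgt.

(* morphism Free(chain 2k) -> Tel_k: i-th 1-position (1-based) |-> f_i for
   i <= k, g_{2k-i+1} for k < i <= 2k; vertices accordingly *)
Definition htel (k : nat) (p : pos) : term telgen :=
  match p with
  | [:: j] => var (TX (if j <= k then j else k.*2 - j))
  | [:: i; _] => var (if i < k then TF i.+1 else TG (k.*2 - i))
  | _ => var (TX 0)
  end.
Definition telsub (k : nat) : seq (term telgen) :=
  [seq htel k p | p <- positions (chain k.*2)].

(* Main.v *)
Require Import Defs.
From mathcomp Require Import all_boot zify.
Set Implicit Arguments. Unset Strict Implicit.

Lemma lookup_map V B (g : pos -> term V) p :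
  p \in positions B -> lookup B (map g (positions B)) p = g p.
Proof.
move=> H; rewrite /lookup (nth_map p) ?index_mem // nth_index //.
Qed.

Fixpoint posgo (i : nat) (L : seq tree) : seq pos :=
  match L with
  | [::] => [::]
  | T :: L' => map (cons i) (positions T) ++ posgo i.+1 L'
  end.

Lemma positions_br L : positions (br L) = mkseq (fun j => [:: j]) (size L).+1 ++ posgo 0 L.
Proof.
simpl; f_equal; move: 0; elim: L => //= T L IH i; by rewrite IH.
Qed.

Lemma mem_posgo i L p : p \in posgo i L <->
  exists j q, [/\ j < size L, q \in positions (nth leaf L j) & p = (i + j) :: q].
Proof.
elim: L i p => [|T L IH] i p /=.
  by split=> // [[j [q [] ]]].
rewrite mem_cat; split.
  case/orP.
    by case/mapP=> q Hq ->; exists 0, q; rewrite addn0.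
  move=> H; case: (proj1 (IH i.+1 p) H) => j [q [H1 H2 ->]]; exists j.+1, q; split => //; by rewrite addnS.
case=> [[|j]] [q [H1 H2 ->]].
  by apply/orP; left; rewrite addn0 map_f.
apply/orP; right; apply (proj2 (IH i.+1 _)); exists j, q; split=> //; by rewrite addnS.
Qed.

Lemma mem_br L p : p \in positions (br L) <->
  (exists j, j <= size L /\ p = [:: j]) \/
  (exists j q, [/\ j < size L, q \in positions (nth leaf L j) & p = j :: q]).
Proof.
rewrite positions_br mem_cat; split.
  case/orP.
    by case/mapP=> j; rewrite mem_iota => /andP[_ Hj] ->; left; exists j; split=> //; lia.
  by move/mem_posgo => H; right; exact: H.
case=> [[j [Hj ->]]|H]; apply/orP; [left|right].
  by apply/mapP; exists j => //; rewrite mem_iota; lia.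
by apply/mem_posgo.
Qed.

Lemma mem_leaf p : p \in positions leaf = (p == [:: 0]).
Proof. by rewrite /= inE. Qed.

Lemma nth_nseq_leaf m j : nth leaf (nseq m leaf) j = leaf.
Proof. by rewrite nth_nseq if_same. Qed.

Lemma mem_chain m p : p \in positions (chain m) <->
  (exists j, j <= m /\ p = [:: j]) \/ (exists j, j < m /\ p = [:: j; 0]).
Proof.
rewrite /chain mem_br size_nseq; split; case=> H; [by left| |by left|].
  case: H => j [q [H1 H2 ->]]; right; exists j; split=> //.
  by move: H2; rewrite nth_nseq_leaf mem_leaf => /eqP->.
case: H => j [H ->]; right; exists j, [:: 0]; split=> //.
by rewrite nth_nseq_leaf.
Qed.

Lemma chain_v m j : j <= m -> [:: j] \in positions (chain m).
Proof. by move=> H; apply/mem_chain; left; exists j. Qed.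
Lemma chain_e m j : j < m -> [:: j; 0] \in positions (chain m).
Proof. by move=> H; apply/mem_chain; right; exists j. Qed.

Definition ccomp {V} m (g : pos -> term V) : term V :=
  coh (chain m) (var [:: 0]) (var [:: m]) (map g (positions (chain m))).
Definition idc {V} (x : term V) : term V := coh leaf (var [:: 0]) (var [:: 0]) [:: x].

Lemma tdim_br L : tdim (br L) = foldr (fun T acc => maxn (tdim T).+1 acc) 0 L.
Proof. by elim: L => //= T L IH. Qed.

Lemma tdim_chain m : 0 < m -> tdim (chain m) = 1.
Proof.
rewrite /chain tdim_br; case: m => // m _ /=.
by elim: m => //= m ->.
Qed.

Lemma in_supp_var q p : in_supp q (var p) <-> below q p.
Proof. split; [by inversion 1 | by constructor]. Qed.

Lemma seqIn_map (A : eqType) B (f : A -> B) (s : seq A) t :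
  seqIn t (map f s) <-> exists2 x, x \in s & f x = t.
Proof.
elim: s => [|a s IH] /=; first by split=> // [[]].
split.
  case=> [<-|/IH [x H1 H2]]; first by exists a; rewrite ?inE ?eqxx.
  by exists x; rewrite // inE H1 orbT.
case=> x; rewrite inE => /orP[/eqP->|H1] H2; first by left.
by right; apply/IH; exists x.
Qed.

Lemma in_supp_map (A : eqType) q B U W (g : A -> term pos) s :
  in_supp q (coh B U W (map g s)) <-> exists2 p, p \in s & in_supp q (g p).
Proof.
split.
  move=> H; inversion H as [|? ? ? ? t Hin Hq]; subst.
  case/seqIn_map: Hin => x H1 H3; subst. by exists x.
case=> p H1 H2; apply: (@supp_coh q _ _ _ _ (g p)) => //; apply/seqIn_map; by exists p.
Qed.

Lemma in_supp_ccomp q m (g : pos -> term pos) :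
  in_supp q (ccomp m g) <-> exists2 p, p \in positions (chain m) & in_supp q (g p).
Proof. exact: in_supp_map. Qed.

Lemma in_supp_idc q x : in_supp q (idc x) <-> in_supp q x.
Proof.
split.
  move=> H; inversion H as [|? ? ? ? t Hin Hq]; subst. by case: Hin => // ->.
by move=> H; apply: (@supp_coh q _ _ _ _ x) => //=; left.
Qed.

Lemma below_1 q j : below q [:: j] <-> q = [:: j].
Proof. split; last by move->; constructor. by inversion 1. Qed.

Lemma below_2 q j y : below q [:: j; y] <-> [\/ q = [:: j; y], q = [:: j] | q = [:: j.+1]].
Proof.
split.
  inversion 1; [by constructor 1| |]; move/below_1: H1 => /= ->; by [constructor 2|constructor 3].
case=> ->; first by constructor.
  by apply: below_src => //; constructor.
by apply: below_tgt => //; constructor.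
Qed.

Lemma below_3 q c y z : below q [:: c; y; z] <->
  [\/ q = [:: c; y; z], below q [:: c; y] | below q [:: c; y.+1]].
Proof.
split.
  inversion 1; [by constructor 1|by constructor 2|by constructor 3].
case=> [->|H|H]; first by constructor.
  by apply: below_src.
by apply: below_tgt.
Qed.

Lemma wf_tvar B p n : p \in positions B -> n = (size p).-1 -> wf (treeComp B) n (var p).
Proof. by move=> H ->; apply: wf_var. Qed.

Lemma csrc_ccomp C m g : 0 < m -> csrc C (ccomp m g) = g [:: 0].
Proof. by move=> H; rewrite /= lookup_map // chain_v. Qed.
Lemma ctgt_ccomp C m g : ctgt C (ccomp m g) = g [:: m].
Proof. by rewrite /= lookup_map // chain_v. Qed.

Lemma subst_ccomp V B (tau : seq (term V)) m g :
  subst B tau (ccomp m g) = ccomp m (fun p => subst B tau (g p)).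
Proof. by rewrite /ccomp /= -map_comp. Qed.

Lemma comp_eq V m (g1 g2 : pos -> term V) :
  (forall j, j <= m -> g1 [:: j] = g2 [:: j]) ->
  (forall j, j < m -> g1 [:: j; 0] = g2 [:: j; 0]) -> ccomp m g1 = ccomp m g2.
Proof.
move=> H1 H2; rewrite /ccomp; congr coh; apply/eq_in_map => p.
by case/mem_chain=> [[j [Hj ->]]|[j [Hj ->]]]; auto.
Qed.

Lemma wf_ccomp C m g : 0 < m ->
  (forall j, j <= m -> wf C 0 (g [:: j])) ->
  (forall j, j < m -> [/\ wf C 1 (g [:: j; 0]), csrc C (g [:: j; 0]) = g [:: j]
                         & ctgt C (g [:: j; 0]) = g [:: j.+1]]) ->
  wf C 1 (ccomp m g).
Proof.
move=> m0 Hv He; apply: wf_coh.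
- by apply: wf_tvar; rewrite ?chain_v.
- by apply: wf_tvar; rewrite ?chain_v.
- by [].
- by [].
- left; split; first exact: tdim_chain.
  split=> q; rewrite in_supp_var below_1 /simg /timg /= ?size_nseq inE;
    by split=> [->|/eqP->].
- by rewrite size_map.
- move=> p Hp; rewrite lookup_map //.
  by case/mem_chain: Hp => [[j [Hj ->]]|[j [Hj ->]]]; [exact: Hv|case: (He j Hj)].
- move=> p Hp; rewrite !lookup_map //.
    by case/mem_chain: Hp => [[j [Hj ->]]//|[j [Hj ->]] _]; case: (He j Hj).
  by case/mem_chain: Hp => [[j [Hj ->]]//|[j [Hj ->]]]; rewrite chain_v //; lia.
- move=> p Hp; rewrite !lookup_map //.
    by case/mem_chain: Hp => [[j [Hj ->]]//|[j [Hj ->]] _]; case: (He j Hj).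
  by case/mem_chain: Hp => [[j [Hj ->]]//|[j [Hj ->]]]; rewrite chain_v //; lia.
Qed.

Lemma wf_idc C x : wf C 0 x -> wf C 1 (idc x).
Proof.
move=> Hx; apply: wf_coh.
- by apply: wf_tvar.
- by apply: wf_tvar.
- by [].
- by [].
- right; split=> q; rewrite in_supp_var below_1 mem_leaf; by split=> [->|/eqP->].
- by [].
- by move=> p; rewrite mem_leaf => /eqP->.
- by move=> p; rewrite mem_leaf => /eqP->.
- by move=> p; rewrite mem_leaf => /eqP->.
Qed.

Lemma csrc_idc C x : csrc C (idc x) = x. Proof. by []. Qed.
Lemma ctgt_idc C x : ctgt C (idc x) = x. Proof. by []. Qed.

Definition X j : term telgen := var (TX j).
Definition Acell i : term telgen := tel_src (TA i).
Definition Icell j : term telgen := idc (X j).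

Lemma AcellE i : Acell i = ccomp 2 (hA i).
Proof. reflexivity. Qed.
Lemma tgtTA i : tel_tgt (TA i) = Icell i.-1.
Proof. reflexivity. Qed.

Lemma wf_tel k n v : tel_isgen k v -> tel_dim v = n -> wf (Tel k) n (var v).
Proof. by move=> H1 H2; apply: wf_var. Qed.

Lemma wf_X k j : j <= k -> wf (Tel k) 0 (X j).
Proof. by move=> H; apply: wf_tel. Qed.

Ltac stx := rewrite /=; (repeat case: ifP => ?); try (congr (var (TX _)); lia); try (congr (X _); lia).

Lemma htel_v k K j : K <= k -> j <= K.*2 -> wf (Tel k) 0 (htel K [:: j]).
Proof. move=> H1 H2; apply: wf_tel => //=; case: ifP => /= H; lia. Qed.


Lemma htel_e k K j : K <= k -> j < K.*2 ->
  [/\ wf (Tel k) 1 (htel K [:: j; 0]), csrc (Tel k) (htel K [:: j; 0]) = htel K [:: j]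
    & ctgt (Tel k) (htel K [:: j; 0]) = htel K [:: j.+1]].
Proof.
move=> H1 H2 /=; case: ifP => H3; split.
- apply: wf_tel => //=; lia.
- stx.
- stx.
- apply: wf_tel => //=; lia.
- stx.
- stx.
Qed.

Lemma wf_Acell k i : 0 < i <= k -> wf (Tel k) 1 (Acell i).
Proof.
move=> H; rewrite AcellE; apply: wf_ccomp => //.
  case=> [|[|[|j]]] //= _; apply: wf_X; lia.
case=> [|[|j]] //= _; split => //; apply: wf_tel => //.
Qed.
Lemma csrc_Acell k i : csrc (Tel k) (Acell i) = X i.-1. Proof. by []. Qed.
Lemma ctgt_Acell k i : ctgt (Tel k) (Acell i) = X i.-1. Proof. by []. Qed.

Lemma wf_Icell k j : j <= k -> wf (Tel k) 1 (Icell j).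
Proof. by move=> H; apply/wf_idc/wf_X. Qed.

Definition vx c j := if j <= c then j else c.*2.+1 - j.
Definition ed c j : term telgen := if j < c then var (TF j.+1) else var (TG (c.*2.+1 - j)).
Definition Wv c (M : term telgen) (p : pos) : term telgen :=
  match p with
  | [:: j] => X (vx c j)
  | [:: j; _] => if j == c then M else ed c j
  | _ => X 0
  end.
Definition Wcell c M := ccomp (c.*2.+1) (Wv c M).
Ltac stx2 := rewrite /= ?/vx; (repeat case: ifP => ?); try (congr (var (TX _)); lia); try (congr (X _); lia).


Lemma Wv_v k c M j : c < k -> wf (Tel k) 0 (Wv c M [:: j]).
Proof. move=> Hc; apply: wf_X; rewrite /vx; case: ifP; lia. Qed.

Lemma ed_ok k c j : c < k -> j < c.*2.+1 -> j <> c ->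
  [/\ wf (Tel k) 1 (ed c j), csrc (Tel k) (ed c j) = X (vx c j)
    & ctgt (Tel k) (ed c j) = X (vx c j.+1)].
Proof.
move=> Hc Hj Hne.
rewrite /ed; case: ifP => H; split.
- apply: wf_tel => //=; lia.
- stx2.
- stx2.
- apply: wf_tel => //=; lia.
- stx2.
- stx2.
Qed.

Lemma Wv_e k c M j : c < k -> j < c.*2.+1 -> wf (Tel k) 1 M -> csrc (Tel k) M = X c ->
  ctgt (Tel k) M = X c ->
  [/\ wf (Tel k) 1 (Wv c M [:: j; 0]), csrc (Tel k) (Wv c M [:: j; 0]) = Wv c M [:: j]
    & ctgt (Tel k) (Wv c M [:: j; 0]) = Wv c M [:: j.+1]].
Proof.
move=> Hc Hj HM Hs Ht /=; case: eqP => [->|Hne].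
  by split => //; [rewrite Hs | rewrite Ht]; rewrite /vx; congr (X _); case: ifP; lia.
exact: ed_ok.
Qed.

Lemma wf_Wcell k c M : c < k -> wf (Tel k) 1 M -> csrc (Tel k) M = X c ->
  ctgt (Tel k) M = X c -> wf (Tel k) 1 (Wcell c M).
Proof.
move=> Hc HM Hs Ht; apply: wf_ccomp => //.
  by move=> j Hj; apply: Wv_v.
by move=> j Hj; apply: Wv_e.
Qed.

Lemma csrc_Wcell k c M : csrc (Tel k) (Wcell c M) = X 0.
Proof. by rewrite csrc_ccomp. Qed.
Lemma ctgt_Wcell k c M : ctgt (Tel k) (Wcell c M) = X 0.
Proof. rewrite ctgt_ccomp /= /vx; case: ifP => H; congr (X _); lia. Qed.

Lemma supp_ucell m q : in_supp q (ccomp m (@var pos)) <-> q \in positions (chain m).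
Proof.
rewrite in_supp_ccomp; split.
  case=> p /mem_chain [[j [Hj ->]]|[j [Hj ->]]] /in_supp_var.
    by move/below_1 => ->; rewrite chain_v.
  by case/below_2 => ->; rewrite ?chain_v ?chain_e //; lia.
move=> H; exists q => //; apply/in_supp_var; constructor.
Qed.

Definition BwL c := nseq c leaf ++ br [:: leaf] :: nseq c leaf.
Definition Bw c := br (BwL c).

Lemma size_BwL c : size (BwL c) = c.*2.+1.
Proof. rewrite size_cat /= !size_nseq; lia. Qed.

Lemma nth_BwL c j : nth leaf (BwL c) j = if j == c then br [:: leaf] else leaf.
Proof.
rewrite nth_cat size_nseq; case: ltnP => H.
  by rewrite nth_nseq_leaf; case: eqP => //; lia.
case E: (j - c) => [|n] /=.
  by rewrite ifT //; lia.
by rewrite nth_nseq_leaf ifF //; lia.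
Qed.

Lemma mem_Bw c p : p \in positions (Bw c) <->
  [\/ exists j, j <= c.*2.+1 /\ p = [:: j], exists j, j <= c.*2 /\ p = [:: j; 0],
      p = [:: c; 1] | p = [:: c; 0; 0]].
Proof.
rewrite /Bw mem_br size_BwL; split.
  case=> [H|[j [q [Hj]]]]; first by constructor 1.
  rewrite nth_BwL; case: eqP => [->|Hne].
    rewrite /= !inE => /orP[/eqP->|/orP[/eqP->|/eqP->]] ->; 
      [constructor 2; exists c; split=>//; lia|by constructor 3|by constructor 4].
  rewrite mem_leaf => /eqP-> ->; constructor 2; exists j; split=>//; lia.
case=> [H|[j [Hj ->]]|->|->]; [by left|right..].
- exists j, [:: 0]; split; first lia.
    by rewrite nth_BwL; case: eqP.
  by [].
- by exists c, [:: 1]; rewrite nth_BwL eqxx; split=> //; lia.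
- by exists c, [:: 0; 0]; rewrite nth_BwL eqxx; split=> //; lia.
Qed.

Lemma Bw_v c j : j <= c.*2.+1 -> [:: j] \in positions (Bw c).
Proof. by move=> H; apply/mem_Bw; constructor 1; exists j. Qed.
Lemma Bw_e c j : j <= c.*2 -> [:: j; 0] \in positions (Bw c).
Proof. by move=> H; apply/mem_Bw; constructor 2; exists j. Qed.
Lemma Bw_e1 c : [:: c; 1] \in positions (Bw c).
Proof. by apply/mem_Bw; constructor 3. Qed.
Lemma Bw_f c : [:: c; 0; 0] \in positions (Bw c).
Proof. by apply/mem_Bw; constructor 4. Qed.

Lemma foldr_nseq_leaf c a :
  foldr (fun T acc => maxn (tdim T).+1 acc) a (nseq c leaf) = if c == 0 then a else maxn 1 a.
Proof. elim: c => //= c ->; case: c => //= c; lia. Qed.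

Lemma tdim_Bw c : tdim (Bw c) = 2.
Proof. rewrite /Bw tdim_br /BwL foldr_cat /= !foldr_nseq_leaf; case: c => //= c; lia. Qed.


Definition wwf c (p : pos) : term pos :=
  match p with [:: j; _] => var [:: j; nat_of_bool (j == c)] | _ => var p end.
Definition Uw c : term pos := ccomp (c.*2.+1) (@var pos).
Definition Ww c : term pos := ccomp (c.*2.+1) (wwf c).
Definition hw c (p : pos) : term telgen :=
  match p with
  | [:: j] => X (vx c j)
  | [:: j; y] => if j == c then (if y == 0 then Acell c.+1 else Icell c) else ed c j
  | [:: _; _; _] => var (TA c.+1)
  | _ => X 0
  end.
Definition Alpha c : term telgen := coh (Bw c) (Uw c) (Ww c) (map (hw c) (positions (Bw c))).

Lemma nseq_mid (T : Type) (x : T) c : nseq c x ++ x :: nseq c x = nseq c.*2.+1 x.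
Proof. by rewrite (_ : c.*2.+1 = c + c.+1) ?nseqD //; lia. Qed.

Lemma bdry_Bw c : bdry 1 (Bw c) = chain (c.*2.+1).
Proof.
have ->: bdry 1 (Bw c) = br (map (bdry 0) (BwL c)) by [].
rewrite /BwL map_cat !map_nseq /chain /=; congr br.
rewrite map_nseq; exact: nseq_mid.
Qed.
Lemma sincl_v c j : sincl 1 (Bw c) [:: j] = [:: j]. Proof. by []. Qed.
Lemma sincl_e c j : sincl 1 (Bw c) [:: j; 0] = [:: j; 0]. Proof. by []. Qed.
Lemma tincl_v c j : tincl 1 (Bw c) [:: j] = [:: j]. Proof. by []. Qed.
Lemma tincl_e c j : tincl 1 (Bw c) [:: j; 0] = [:: j; nat_of_bool (j == c)].
Proof. by rewrite /Bw /= nth_BwL; case: eqP. Qed.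

Lemma simg_Bw c q : q \in simg 1 (Bw c) = (q \in positions (chain c.*2.+1)).
Proof.
rewrite /simg bdry_Bw; apply/mapP/idP.
  case=> p Hp ->; move: (Hp); case/mem_chain => [[j [Hj E]]|[j [Hj E]]]; rewrite E in Hp *;
    by rewrite ?sincl_v ?sincl_e.
move=> H; exists q => //; move: H; case/mem_chain => [[j [Hj ->]]|[j [Hj ->]]] //;
  by rewrite ?sincl_v ?sincl_e.
Qed.

Lemma timg_Bw c q : q \in timg 1 (Bw c) <->
  (exists j, j <= c.*2.+1 /\ q = [:: j]) \/ (exists j, j <= c.*2 /\ q = [:: j; nat_of_bool (j == c)]).
Proof.
rewrite /timg bdry_Bw; split.
  case/mapP=> p; case/mem_chain => [[j [Hj ->]]|[j [Hj ->]]] ->; first by left; exists j.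
  right; exists j; split; first lia.
  by rewrite tincl_e.
case=> [[j [Hj ->]]|[j [Hj ->]]]; apply/mapP.
  by exists [:: j]; rewrite ?chain_v.
exists [:: j; 0]; first by rewrite chain_e //; lia.
by rewrite tincl_e.
Qed.

Lemma supp_Ww c q : in_supp q (Ww c) <->
  (exists j, j <= c.*2.+1 /\ q = [:: j]) \/ (exists j, j <= c.*2 /\ q = [:: j; nat_of_bool (j == c)]).
Proof.
rewrite in_supp_ccomp; split.
  case=> p /mem_chain [[j [Hj ->]]|[j [Hj ->]]] /in_supp_var.
    by move/below_1 => ->; left; exists j.
  case/below_2 => ->; [right; exists j; split=> //; lia|left; exists j; split=>//; lia|].
  by left; exists j.+1.
case=> [[j [Hj ->]]|[j [Hj ->]]].
  by exists [:: j]; rewrite ?chain_v //; apply/in_supp_var; constructor.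
exists [:: j; 0]; first by rewrite chain_e //; lia.
by apply/in_supp_var; constructor.
Qed.

Lemma lookup_hw c p : p \in positions (Bw c) -> lookup (Bw c) (map (hw c) (positions (Bw c))) p = hw c p.
Proof. exact: lookup_map. Qed.

Lemma subst_var V B (tau : seq (term V)) p : subst B tau (var p) = lookup B tau p.
Proof. by []. Qed.

Lemma csrc_Alpha k c : csrc (Tel k) (Alpha c) = Wcell c (Acell c.+1).
Proof.
change (subst (Bw c) (map (hw c) (positions (Bw c))) (Uw c) = Wcell c (Acell c.+1)).
rewrite /Uw subst_ccomp; apply: comp_eq => j Hj; rewrite subst_var lookup_hw ?Bw_v ?Bw_e //; lia.
Qed.

Lemma ctgt_Alpha k c : ctgt (Tel k) (Alpha c) = Wcell c (Icell c).
Proof.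
change (subst (Bw c) (map (hw c) (positions (Bw c))) (Ww c) = Wcell c (Icell c)).
rewrite /Ww subst_ccomp; apply: comp_eq => j Hj.
  by rewrite subst_var lookup_hw ?Bw_v.
rewrite [wwf _ _]/= subst_var.
case: eqP => [->|Hne]; first by rewrite lookup_hw ?Bw_e1 //= eqxx.
rewrite lookup_hw /=; first by case: eqP.
by apply: Bw_e; lia.
Qed.

Lemma wf_Alpha k c : c < k -> wf (Tel k) 2 (Alpha c).
Proof.
move=> Hc; apply: wf_coh.
- apply: wf_ccomp => // [j Hj|j Hj]; first by apply: wf_tvar; rewrite ?Bw_v.
  by split => //; apply: wf_tvar; rewrite ?Bw_e //; lia.
- apply: wf_ccomp => // [j Hj|j Hj]; first by apply: wf_tvar; rewrite ?Bw_v.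
  split => //=; apply: wf_tvar => //; case: eqP => [->|Hne]; rewrite ?Bw_e1 ?Bw_e //; lia.
- by rewrite !csrc_ccomp.
- by rewrite !ctgt_ccomp.
- left; split; first exact: tdim_Bw.
  split=> q.
    by rewrite supp_ucell simg_Bw.
  by rewrite supp_Ww timg_Bw.
- by rewrite size_map.
- move=> p Hp; rewrite lookup_hw //.
  case/mem_Bw: Hp => [[j [Hj ->]]|[j [Hj ->]]|->|->] /=.
  + by apply: wf_X; rewrite /vx; case: ifP; lia.
  + case: eqP => [_|Hne]; first by apply: wf_Acell; lia.
    by case: (@ed_ok k c j Hc) => //; lia.
  + by rewrite eqxx; apply: wf_Icell; lia.
  + by apply: wf_tel => //=; lia.
- move=> p Hp Hs; rewrite !lookup_hw //.
  + case/mem_Bw: Hp Hs => [[j [Hj ->]]//|[j [Hj ->]]|->|->] _ /=.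
    * case: eqP => [E|Hne]; first by rewrite /vx E leqnn.
      by case: (@ed_ok k c j Hc) => //; lia.
    * by rewrite eqxx /= /vx leqnn.
    * by rewrite eqxx.
  + case/mem_Bw: Hp Hs => [[j [Hj ->]]//|[j [Hj ->]]|->|->] _ /=;
      rewrite ?Bw_v ?Bw_e //; lia.
- move=> p Hp Hs; rewrite !lookup_hw //.
  + case/mem_Bw: Hp Hs => [[j [Hj ->]]//|[j [Hj ->]]|->|->] _ /=.
    * case: eqP => [E|Hne]; first by rewrite ctgt_Acell /vx E ifF /=; [congr (X _)|]; lia.
      by case: (@ed_ok k c j Hc) => //; lia.
    * by rewrite eqxx /Icell ctgt_idc /vx ifF; [congr (X _)|]; lia.
    * by rewrite eqxx.
  + case/mem_Bw: Hp Hs => [[j [Hj ->]]//|[j [Hj ->]]|->|->] _ /=;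
      rewrite ?Bw_v ?Bw_e ?Bw_e1 //; lia.
Qed.

Definition shf c (q : pos) : term pos :=
  match q with [:: a] => var [:: c + a] | [:: a; b] => var [:: c + a; b] | _ => var [:: 0] end.
Definition MID c : term pos := ccomp 2 (shf c).
Definition w0 c (p : pos) : term pos :=
  match p with
  | [:: j] => var [:: if j <= c then j else j.+1]
  | [:: j; _] => if j < c then var [:: j; 0] else if j == c then MID c else var [:: j.+1; 0]
  | _ => var [:: 0]
  end.
Definition W0 c : term pos := ccomp (c.*2.+1) (w0 c).
Definition CohCell c (U : term pos) : term telgen := coh (chain (c.*2.+2)) U (W0 c) (telsub c.+1).

Lemma lookup_tel c p : p \in positions (chain (c.*2.+2)) ->
  lookup (chain (c.*2.+2)) (telsub c.+1) p = htel c.+1 p.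
Proof. exact: lookup_map. Qed.

Ltac tvar := apply: wf_tvar; [rewrite ?chain_v ?chain_e //; lia | by []].

Ltac vs := rewrite /=; (repeat case: ifP => ?); try reflexivity; try (congr (var [:: _]); lia); try lia.

Lemma wf_W0 c : wf (treeComp (chain (c.*2.+2))) 1 (W0 c).
Proof.
apply: wf_ccomp => // [j Hj|j Hj].
  rewrite /=; apply: wf_tvar => //; case: ifP => H0; rewrite chain_v //; lia.
rewrite /=; case: ltnP => H1; last case: eqP => [E|H2].
- split; first by tvar.
  + vs.
  + vs.
- subst j; split.
  + apply: wf_ccomp => // [a Ha|a Ha]; first by case: a Ha => [|[|[|a]]] //= _; tvar.
    by case: a Ha => [|[|a]] //= _; (split; [tvar|done|congr (var [:: _]); lia]).
  + by rewrite /MID csrc_ccomp //= addn0 leqnn.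
  + rewrite /MID ctgt_ccomp. vs.
- split; first by tvar.
  + vs.
  + vs.
Qed.

Lemma csrc_W0 c : csrc (treeComp (chain (c.*2.+2))) (W0 c) = var [:: 0].
Proof. by rewrite csrc_ccomp. Qed.
Lemma ctgt_W0 c : ctgt (treeComp (chain (c.*2.+2))) (W0 c) = var [:: c.*2.+2].
Proof. by rewrite ctgt_ccomp /= ifF //; lia. Qed.

Lemma supp_var_chain q n r : in_supp q (var r) -> r \in positions (chain n) -> q \in positions (chain n).
Proof.
move=> /in_supp_var H Hr; move: H; case/mem_chain: Hr => [[j [Hj ->]]|[j [Hj ->]]].
  by move/below_1 => ->; rewrite chain_v.
by case/below_2 => ->; rewrite ?chain_v ?chain_e //; lia.
Qed.

Lemma supp_W0 c q : in_supp q (W0 c) <-> q \in positions (chain (c.*2.+2)).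
Proof.
rewrite in_supp_ccomp; split.
  case=> p /mem_chain [[j [Hj ->]]|[j [Hj ->]]]; rewrite [w0 _ _]/=.
    by move=> H; apply: (supp_var_chain H); case: ifP => H0; rewrite chain_v //; lia.
  case: ltnP => H1; last case: eqP => [E|H2].
  - by move=> H; apply: (supp_var_chain H); rewrite chain_e //; lia.
  - subst j; case/in_supp_ccomp => p0 /mem_chain [[a [Ha ->]]|[a [Ha ->]]]; rewrite [shf _ _]/=;
      move=> H; apply: (supp_var_chain H); rewrite ?chain_v ?chain_e //; lia.
  - by move=> H; apply: (supp_var_chain H); rewrite chain_e //; lia.
case/mem_chain => [[j [Hj ->]]|[j [Hj ->]]].
- case: (ltnP c j) => H1.
  + case: (eqVneq j c.+1) => [E|H2].
    * subst j; exists [:: c; 0]; first by rewrite chain_e //; lia.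
      rewrite /= ltnn eqxx; apply/in_supp_ccomp; exists [:: 1]; first by rewrite chain_v.
      by apply/in_supp_var; rewrite addn1; constructor.
    * exists [:: j.-1]; first by rewrite chain_v //; lia.
      rewrite /= ifF; last lia.
      by rewrite prednK; [apply/in_supp_var; constructor|lia].
  + exists [:: j]; first by rewrite chain_v //; lia.
    by rewrite /= H1; apply/in_supp_var; constructor.
- case: (ltnP j c) => H1.
    exists [:: j; 0]; first by rewrite chain_e //; lia.
    by rewrite /= H1; apply/in_supp_var; constructor.
  case: (ltnP c.+1 j) => H2.
    exists [:: j.-1; 0]; first by rewrite chain_e //; lia.
    rewrite /= ifF; last lia. rewrite ifF; last (apply/eqP; lia).
    by rewrite prednK; [apply/in_supp_var; constructor|lia].
  exists [:: c; 0]; first by rewrite chain_e //; lia.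
  rewrite /= ltnn eqxx; apply/in_supp_ccomp.
  case: (eqVneq j c) => [->|H3].
    by exists [:: 0; 0]; [|rewrite /= addn0; apply/in_supp_var; constructor].
  exists [:: 1; 0] => //; rewrite /= (_ : c + 1 = j); [apply/in_supp_var; constructor|lia].
Qed.

Lemma subst_W0 c : subst (chain (c.*2.+2)) (telsub c.+1) (W0 c) = Wcell c (Acell c.+1).
Proof.
rewrite /W0 subst_ccomp; apply: comp_eq => j Hj.
  rewrite [w0 _ _]/= subst_var lookup_tel; last by case: ifP; rewrite chain_v //; lia.
  rewrite /= /vx /X; case: (leqP j c) => H; (repeat case: ifP => ?); try reflexivity; try (congr (var (TX _)); lia); lia.
rewrite [w0 _ _]/= /Wv; case: (ltngtP j c) => H1.
- rewrite subst_var lookup_tel; last by rewrite chain_e //; lia.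
  by rewrite /= /ed H1 ifT //; lia.
- rewrite subst_var lookup_tel; last by rewrite chain_e //; lia.
  rewrite /= /ed ifF; last lia.
  rewrite ifF; last lia.
  congr (var (TG _)); lia.
- subst j; rewrite /MID subst_ccomp AcellE; apply: comp_eq => a Ha.
    by case: a Ha => [|[|[|a]]] // _; rewrite subst_var lookup_tel ?chain_v /=;
      (try lia); rewrite ?addn0 ?addn1 ?addn2 /=; repeat case: ifP => ? //; congr (var (TX _)); lia.
  case: a Ha => [|[|a]] // _; rewrite subst_var lookup_tel ?chain_e /=; (try lia); rewrite ?addn0 ?addn1 /=; [by rewrite ltnSn | rewrite ltnn; congr (var (TG _)); lia].
Qed.

Lemma wf_CohCell k c U : c < k ->
  wf (treeComp (chain (c.*2.+2))) 1 U ->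
  (forall q, in_supp q U <-> q \in positions (chain (c.*2.+2))) ->
  csrc (treeComp (chain (c.*2.+2))) U = var [:: 0] ->
  ctgt (treeComp (chain (c.*2.+2))) U = var [:: c.*2.+2] ->
  wf (Tel k) 2 (CohCell c U).
Proof.
move=> Hc HU HsU Hs Ht; apply: wf_coh.
- exact: HU.
- exact: wf_W0.
- by rewrite Hs csrc_W0.
- by rewrite Ht ctgt_W0.
- by right; split=> q; [exact: HsU|exact: supp_W0].
- by rewrite size_map.
- move=> p Hp; rewrite lookup_tel //.
  case/mem_chain: (Hp) => [[j [Hj ->]]|[j [Hj ->]]].
    by apply: htel_v => //; lia.
  by case: (@htel_e k c.+1 j) => //; lia.
- move=> p Hp Hs'; rewrite !lookup_tel //.
    case/mem_chain: (Hp) Hs' => [[j [Hj ->]]//|[j [Hj ->]] _].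
    by case: (@htel_e k c.+1 j) => //; lia.
  by case/mem_chain: (Hp) => [[j [Hj ->]]//|[j [Hj ->]]]; rewrite chain_v //; lia.
- move=> p Hp Hs'; rewrite !lookup_tel //.
    case/mem_chain: (Hp) Hs' => [[j [Hj ->]]//|[j [Hj ->]] _].
    by case: (@htel_e k c.+1 j) => //; lia.
  by case/mem_chain: (Hp) => [[j [Hj ->]]//|[j [Hj ->]]]; rewrite chain_v //; lia.
Qed.

Lemma csrc_CohCell k c U : csrc (Tel k) (CohCell c U) = subst (chain (c.*2.+2)) (telsub c.+1) U.
Proof. by []. Qed.
Lemma ctgt_CohCell k c U : ctgt (Tel k) (CohCell c U) = Wcell c (Acell c.+1).
Proof. exact: subst_W0. Qed.

Definition v c (p : pos) : term pos :=
  match p with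
  | [:: j] => var [:: if j <= c.+1 then j else j.-1]
  | [:: j; _] => if j < c.+1 then var [:: j; 0]
                 else if j == c.+1 then idc (var [:: c.+1]) else var [:: j.-1; 0]
  | _ => var [:: 0]
  end.
Definition V c : term pos := ccomp (c.*2.+3) (v c).

Lemma wf_V c : wf (treeComp (chain (c.*2.+2))) 1 (V c).
Proof.
apply: wf_ccomp => // [j Hj|j Hj].
  rewrite /=; apply: wf_tvar => //; case: ifP => H; rewrite chain_v //; lia.
rewrite [v c _]/=; case: (ltngtP j c.+1) => H1.
- split; first by tvar.
  + vs.
  + vs.
- split; first by tvar.
  + vs.
  + vs.
- subst j; split.
  + by apply/wf_idc; tvar.
  + rewrite csrc_idc; vs.
  + rewrite ctgt_idc; vs.
Qed.

Lemma csrc_V c : csrc (treeComp (chain (c.*2.+2))) (V c) = var [:: 0].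
Proof. by rewrite csrc_ccomp. Qed.
Lemma ctgt_V c : ctgt (treeComp (chain (c.*2.+2))) (V c) = var [:: c.*2.+2].
Proof. by rewrite ctgt_ccomp /= ifF //; lia. Qed.

Lemma supp_V c q : in_supp q (V c) <-> q \in positions (chain (c.*2.+2)).
Proof.
rewrite in_supp_ccomp; split.
  case=> p /mem_chain [[j [Hj ->]]|[j [Hj ->]]]; rewrite [v _ _]/=.
    by move=> H; apply: (supp_var_chain H); case: ifP => H0; rewrite chain_v //; lia.
  case: (ltngtP j c.+1) => H1.
  - by move=> H; apply: (supp_var_chain H); rewrite chain_e //; lia.
  - by move=> H; apply: (supp_var_chain H); rewrite chain_e //; lia.
  - by move/in_supp_idc => H; apply: (supp_var_chain H); rewrite chain_v //; lia.
case/mem_chain => [[j [Hj ->]]|[j [Hj ->]]].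
- case: (leqP j c.+1) => H1.
    exists [:: j]; first by rewrite chain_v //; lia.
    by rewrite /= H1; apply/in_supp_var; constructor.
  exists [:: j.+1]; first by rewrite chain_v //; lia.
  by rewrite /= ifF; [apply/in_supp_var; constructor|lia].
- case: (ltnP j c.+1) => H1.
    exists [:: j; 0]; first by rewrite chain_e //; lia.
    by rewrite /= H1; apply/in_supp_var; constructor.
  exists [:: j.+1; 0]; first by rewrite chain_e //; lia.
  rewrite /= ifF; last lia. rewrite ifF; last (apply/eqP; lia).
  by apply/in_supp_var; constructor.
Qed.

Lemma subst_V c : subst (chain (c.*2.+2)) (telsub c.+1) (V c) = Wcell c.+1 (Icell c.+1).
Proof.
rewrite /V subst_ccomp; apply: comp_eq => j Hj.
  rewrite [v _ _]/= subst_var lookup_tel; last by case: ifP => H0; rewrite chain_v //; lia.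
  rewrite /= /vx /X; case: (leqP j c.+1) => H; (repeat case: ifP => ?); try reflexivity; try (congr (var (TX _)); lia); lia.
rewrite [v _ _]/= /Wv; case: (ltngtP j c.+1) => H1.
- rewrite subst_var lookup_tel; last by rewrite chain_e //; lia.
  by rewrite /= /ed H1.
- rewrite subst_var lookup_tel; last by rewrite chain_e //; lia.
  rewrite /= /ed ifF; last lia.
  rewrite ifF; last lia.
  congr (var (TG _)); lia.
- subst j; rewrite /Icell /idc /=.
  by rewrite lookup_tel ?chain_v //= leqnn.
Qed.

Definition fv (p : pos) : term pos :=
  match p with [:: _; _] => idc (var [:: 0]) | _ => var [:: 0] end.
Definition Fin : term telgen := coh leaf (ccomp 1 fv) (idc (var [:: 0])) [:: X 0].

Lemma csrc_Fin k : csrc (Tel k) Fin = Wcell 0 (Icell 0).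
Proof. by []. Qed.
Lemma ctgt_Fin k : ctgt (Tel k) Fin = Icell 0.
Proof. by []. Qed.

Lemma wf_Fin k : wf (Tel k) 2 Fin.
Proof.
apply: wf_coh.
- apply: wf_ccomp => // [j Hj|j Hj].
    by apply: wf_tvar; rewrite ?mem_leaf.
  case: j Hj => // _; split => //; apply/wf_idc; apply: wf_tvar; by rewrite ?mem_leaf.
- by apply/wf_idc; apply: wf_tvar; rewrite ?mem_leaf.
- by [].
- by [].
- right; split=> q; rewrite mem_leaf.
    rewrite in_supp_ccomp; split.
      case=> p /mem_chain [[j [Hj ->]]|[j [Hj ->]]] /=.
        by move/in_supp_var/below_1 => ->.
      by case: j Hj => // _ /in_supp_idc /in_supp_var/below_1 ->.
    by move/eqP->; exists [:: 0]; [rewrite chain_v|apply/in_supp_var; constructor].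
  rewrite in_supp_idc in_supp_var below_1; by split=> [->|/eqP].
- by [].
- by move=> p; rewrite mem_leaf => /eqP->; apply: wf_X.
- by move=> p; rewrite mem_leaf => /eqP->.
- by move=> p; rewrite mem_leaf => /eqP->.
Qed.

Definition C0 K : term telgen := subst (chain (K.+1).*2) (telsub K.+1) (ucell (K.+1).*2).

Lemma C0E K : C0 K = ccomp (K.*2.+2) (htel K.+1).
Proof.
rewrite /C0 /ucell -/(ccomp _ _) subst_ccomp; apply: comp_eq => j Hj;
  rewrite subst_var lookup_tel ?chain_v ?chain_e //.
Qed.

Lemma cf0_ok K : [/\ wf (Tel K.+1) 1 (C0 K), csrc (Tel K.+1) (C0 K) = X 0
  & ctgt (Tel K.+1) (C0 K) = X 0].
Proof.
rewrite C0E; split.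
- apply: wf_ccomp => // [j Hj|j Hj]; first by apply: htel_v.
  exact: htel_e.
- by rewrite csrc_ccomp.
- rewrite ctgt_ccomp /= ifF; last lia. congr (X _); lia.
Qed.

Definition cf K j : term telgen :=
  if j == 0 then C0 K else if j == K.*2.+3 then Icell 0
  else if odd j then Wcell (K - j./2) (Acell (K - j./2).+1)
  else Wcell (K - (j.-1)./2) (Icell (K - (j.-1)./2)).
Definition df K j : term telgen :=
  if j == 0 then CohCell K (ccomp (K.*2.+2) (@var pos))
  else if odd j then Alpha (K - j./2)
  else if (j.-1)./2 == K then Fin
  else CohCell (K - (j.-1)./2).-1 (V (K - (j.-1)./2).-1).

Lemma par j : j = 0 \/ exists t, j = t.*2.+1 \/ j = t.*2.+2.
Proof.
elim: j => [|j [->|[t [->|->]]]]; first by left.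
- by right; exists 0; left.
- by right; exists t; right.
- by right; exists t.+1; left.
Qed.

Lemma odd1 t : odd t.*2.+1 = true. Proof. by rewrite /= odd_double. Qed.
Lemma odd2 t : odd t.*2.+2 = false. Proof. by rewrite /= odd_double. Qed.
Lemma half1 t : (t.*2.+1)./2 = t. Proof. by rewrite /= uphalf_double. Qed.

Lemma cf_ok K j : j <= K.*2.+3 -> [/\ wf (Tel K.+1) 1 (cf K j), csrc (Tel K.+1) (cf K j) = X 0
  & ctgt (Tel K.+1) (cf K j) = X 0].
Proof.
move=> Hj; rewrite /cf; case: eqP => [_|H0]; first exact: cf0_ok.
case: eqP => [_|H1].
  by split => //; apply: wf_Icell.
case: (par j) => [//|[t [E|E]]]; subst j.
- rewrite odd1 half1; split; [apply: wf_Wcell|apply: csrc_Wcell|apply: ctgt_Wcell] => //; try lia.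
  by apply: wf_Acell; lia.
- rewrite odd2 (_ : (t.*2.+2).-1 = t.*2.+1) // half1.
  split; [apply: wf_Wcell|apply: csrc_Wcell|apply: ctgt_Wcell] => //; try lia.
  by apply: wf_Icell; lia.
Qed.

Lemma df_ok K j : j < K.*2.+3 -> [/\ wf (Tel K.+1) 2 (df K j), csrc (Tel K.+1) (df K j) = cf K j
  & ctgt (Tel K.+1) (df K j) = cf K j.+1].
Proof.
move=> Hj; rewrite /df /cf.
case: (par j) => [E|[t [E|E]]]; subst j.
- rewrite eqxx; split.
  + apply: wf_CohCell; [done| |exact: supp_ucell|by rewrite csrc_ccomp|by rewrite ctgt_ccomp].
    apply: wf_ccomp => // [j Hj'|j Hj']; first by apply: wf_tvar; rewrite ?chain_v.
    by split => //; apply: wf_tvar; rewrite ?chain_e //; lia.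
  + by [].
  + rewrite ctgt_CohCell (_ : (1 == 0) = false) // (_ : (1 == K.*2.+3) = false); last by apply/eqP; lia.
    by rewrite (_ : odd 1 = true) // (_ : 1./2 = 0) // subn0.
- rewrite odd1 (_ : (t.*2.+2).-1 = t.*2.+1) // odd2 !half1 !ifF; try lia.
  split; [apply: wf_Alpha; lia|apply: csrc_Alpha|apply: ctgt_Alpha].
  rewrite odd2 (_ : (t.*2.+2).-1 = t.*2.+1) // half1 (_ : (t.*2.+2 == 0) = false) //.
  rewrite (_ : (t.*2.+2 == K.*2.+3) = false); last by apply/eqP; lia.
  rewrite -[t.*2.+3]/((t.+1).*2.+1) odd1 half1 (_ : ((t.+1).*2.+1 == 0) = false) //.
  case: (eqVneq t K) => [Et|Nt].
  + subst t; rewrite subnn; split; [exact: wf_Fin|exact: csrc_Fin|].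
    by rewrite ctgt_Fin ifT //; exact: eqxx.
  + rewrite (_ : ((t.+1).*2.+1 == K.*2.+3) = false); last by apply/eqP; lia.
    have E1 : (K - t).-1.+1 = K - t by lia.
    have E2 : K - t.+1 = (K - t).-1 by lia.
    split.
    * apply: wf_CohCell; [lia|exact: wf_V|exact: supp_V|exact: csrc_V|exact: ctgt_V].
    * by rewrite csrc_CohCell subst_V E1.
    * by rewrite ctgt_CohCell E2 E1.
Qed.

Definition Btop m := br [:: chain m].

Lemma mem_Btop m p : p \in positions (Btop m) <->
  [\/ p = [:: 0], p = [:: 1], exists j, j <= m /\ p = [:: 0; j]
    | exists j, j < m /\ p = [:: 0; j; 0]].
Proof.
rewrite /Btop mem_br /=; split.
  case=> [[j [Hj ->]]|[j [q [Hj Hq ->]]]].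
    by case: j Hj => [|[|]] // _; [constructor 1|constructor 2].
  case: j Hj Hq => // _ /= /mem_chain [[j [Hj ->]]|[j [Hj ->]]].
    by constructor 3; exists j.
  by constructor 4; exists j.
case=> [->|->|[j [Hj ->]]|[j [Hj ->]]]; [by left; exists 0|by left; exists 1| |].
  right; exists 0, [:: j]; split=> //=; by apply/mem_chain; left; exists j.
right; exists 0, [:: j; 0]; split=> //=; by apply/mem_chain; right; exists j.
Qed.

Definition htop K (p : pos) : term telgen :=
  match p with
  | [:: 0; j] => cf K j
  | [:: 0; j; _] => df K j
  | _ => X 0
  end.
Definition Top K : term telgen :=
  coh (Btop (K.*2.+3)) (var [:: 0; 0]) (var [:: 0; K.*2.+3]) (map (htop K) (positions (Btop (K.*2.+3)))).

Lemma tdim_Btop m : 0 < m -> tdim (Btop m) = 2.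
Proof. by move=> H; rewrite /Btop tdim_br; move: (tdim_chain H) => /= ->. Qed.

Lemma simg_Btop m q : q \in simg 1 (Btop m) = (q \in [:: [:: 0]; [:: 1]; [:: 0; 0]]).
Proof. by []. Qed.
Lemma timg_Btop m q : q \in timg 1 (Btop m) = (q \in [:: [:: 0]; [:: 1]; [:: 0; m]]).
Proof. by rewrite /timg /= size_nseq. Qed.

Lemma lookup_top K p : p \in positions (Btop (K.*2.+3)) ->
  lookup (Btop (K.*2.+3)) (map (htop K) (positions (Btop (K.*2.+3)))) p = htop K p.
Proof. exact: lookup_map. Qed.

Lemma wf_Top K : wf (Tel K.+1) 2 (Top K).
Proof.
apply: wf_coh.
- by apply: wf_tvar => //; apply/mem_Btop; constructor 3; exists 0.
- by apply: wf_tvar => //; apply/mem_Btop; constructor 3; exists (K.*2.+3).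
- by [].
- by [].
- left; split; first exact: tdim_Btop.
  split=> q; rewrite ?simg_Btop ?timg_Btop in_supp_var below_2 !inE;
    (split; [case=> ->; rewrite eqxx ?orbT //|by case/or3P => /eqP ->; constructor]).
- by rewrite size_map.
- move=> p Hp; rewrite lookup_top //.
  case/mem_Btop: Hp => [->|->|[j [Hj ->]]|[j [Hj ->]]] /=.
  + exact: wf_X.
  + exact: wf_X.
  + by case: (cf_ok Hj).
  + by case: (df_ok Hj).
- move=> p Hp Hs; rewrite !lookup_top //.
  + case/mem_Btop: Hp Hs => [->|->|[j [Hj ->]]|[j [Hj ->]]] //= _.
    * by case: (cf_ok Hj).
    * by case: (df_ok Hj).
  + case/mem_Btop: Hp Hs => [->|->|[j [Hj ->]]|[j [Hj ->]]] // _; apply/mem_Btop; first [by constructor 1|by constructor 2|by constructor 3; exists j; split => //; lia|by constructor 3; exists j.+1; split => //; lia].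
- move=> p Hp Hs; rewrite !lookup_top //.
  + case/mem_Btop: Hp Hs => [->|->|[j [Hj ->]]|[j [Hj ->]]] //= _.
    * by case: (cf_ok Hj).
    * by case: (df_ok Hj).
  + case/mem_Btop: Hp Hs => [->|->|[j [Hj ->]]|[j [Hj ->]]] // _; apply/mem_Btop; first [by constructor 1|by constructor 2|by constructor 3; exists j; split => //; lia|by constructor 3; exists j.+1; split => //; lia].
Qed.

Lemma csrc_Top K : csrc (Tel K.+1) (Top K) = C0 K.
Proof.
change (lookup (Btop (K.*2.+3)) (map (htop K) (positions (Btop (K.*2.+3)))) [:: 0; 0] = C0 K).
by rewrite lookup_top //; apply/mem_Btop; constructor 3; exists 0.
Qed.

Lemma ctgt_Top K : ctgt (Tel K.+1) (Top K) = Icell 0.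
Proof.
change (lookup (Btop (K.*2.+3)) (map (htop K) (positions (Btop (K.*2.+3)))) [:: 0; K.*2.+3] = Icell 0).
rewrite lookup_top; last by apply/mem_Btop; constructor 3; exists (K.*2.+3).
by rewrite /= /cf eqxx.
Qed.

Theorem theorem5p2 : forall k : nat, 0 < k ->
  exists t : term telgen,
    wf (Tel k) 2 t /\
    csrc (Tel k) t = subst (chain k.*2) (telsub k) (ucell k.*2) /\
    ctgt (Tel k) t = subst leaf [:: var (TX 0)] idcell.
Proof.
case=> // K _; exists (Top K); split; first exact: wf_Top.
by split; [rewrite csrc_Top | rewrite ctgt_Top].
Qed.
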